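(* Let $A$ be a finite alphabet with $k=|A|$. For all $u\in A^*$ and $n\in\mathbb{N}$ there exists some $v\in A^*$ with $v\lesssim_n u$ and $|v|\leq f_k(n)$.
   Context: For words $u,v$, $u\sqsubseteq v$ (subword) means $u=a_1\cdots a_\ell$ with letters $a_i$ and $v=v_0a_1v_1\cdots a_\ell v_\ell$ for some words $v_i$. For $n\in\mathbb{N}$, $u\sim_n v$ iff $u$ and $v$ have exactly the same subwords of length at most $n$, and $u\lesssim_n v$ iff $u\sim_n v$ and $u\sqsubseteq v$. The functions $f_k:\mathbb{N}\to\mathbb{N}$ ($k\geq1$) are defined by $f_1(n)=n$ and $f_{k+1}(n)=\max_{0\leq m\leq n}\bigl(m f_k(n+1-m)+m+f_k(n-m)\bigr)$. *)

(* Defs.v *)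
From mathcomp Require Import all_boot.
Set Implicit Arguments. Unset Strict Implicit. Unset Printing Implicit Defensive.

(* Words over an alphabet A are sequences [seq A]; the (scattered) subword
   relation u ⊑ v is MathComp's [subseq u v]. *)

Definition simn (A : eqType) (n : nat) (u v : seq A) : Prop :=
  forall w : seq A, size w <= n -> subseq w u = subseq w v.

Definition lesimn (A : eqType) (n : nat) (u v : seq A) : Prop :=
  simn n u v /\ subseq u v.

(* f_1(n) = n,
   f_{k+1}(n) = max_{0<=m<=n} (m f_k(n+1-m) + m + f_k(n-m)).
   Indexed so that [fk k] is f_{k+1}. *)
Fixpoint fk (k : nat) (n : nat) : nat :=
  match k with
  | 0 => n
  | k'.+1 => \max_(m < n.+1) (m * fk k' (n.+1 - m) + m + fk k' (n - m))
  end.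

Definition f (k n : nat) : nat := fk k.-1 n.

(* Main.v *)
Require Import Defs.
From mathcomp Require Import all_boot.
From mathcomp Require Import zify.
From Stdlib Require Import Classical.
Set Implicit Arguments. Unset Strict Implicit. Unset Printing Implicit Defensive.

Fixpoint h (k n : nat) : nat :=
  match k with
  | 0 => 0
  | k'.+1 => \max_(m < n.+1) (m * h k' (n.+1 - m) + m + h k' (n - m))
  end.

Lemma max_id n : \max_(m < n.+1) (m : nat) = n.
Proof.
apply/eqP; rewrite eqn_leq; apply/andP; split.
  by apply/bigmax_leqP => i _; rewrite -ltnS; exact: ltn_ord.
by have := @leq_bigmax _ (fun m : 'I_n.+1 => (m : nat)) ord_max.
Qed.

Lemma h_fk k n : h k.+1 n = fk k n.
Proof.
elim: k n => [|k IHk] n.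
  rewrite /=. under eq_bigr => i _ do rewrite muln0 !addn0. exact: max_id.
change (\max_(m < n.+1) (m * h k.+1 (n.+1 - m) + m + h k.+1 (n - m)) = \max_(m < n.+1) (m * fk k (n.+1 - m) + m + fk k (n - m))). apply: eq_bigr => i _. by rewrite !IHk.
Qed.

Lemma subseq_catE (T : eqType) (x y w : seq T) :
  subseq w (x ++ y) -> exists w0 w1, w = w0 ++ w1 /\ subseq w0 x /\ subseq w1 y.
Proof.
elim: x w => [|z x IH] w.
  move=> H; exists [::], w; split => //; split => //; exact: sub0seq.
case: w => [|t w].
  move=> _; exists [::], [::]; split => //; split; exact: sub0seq.
rewrite cat_cons /=. case: eqP => [->|_] H.
  have [w0 [w1 [-> [H0 H1]]]] := IH _ H.
  exists (z :: w0), w1; split => //; split => //=; by rewrite eqxx.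
have [w0 [w1 [-> [H0 H1]]]] := IH _ H.
exists w0, w1; split => //; split => //.
exact: subseq_trans H0 (subseq_cons _ _).
Qed.

Inductive arches (T : eqType) (B : seq T) : nat -> seq T -> Prop :=
| Arch0 u : arches B 0 u
| ArchS c s a u2 : a \notin s -> {subset B <= a :: s} -> arches B c u2 ->
    arches B c.+1 (s ++ a :: u2).

Lemma arches_sub (T : eqType) (B : seq T) c u : arches B c u ->
  forall y, {subset y <= B} -> size y <= c -> subseq y u.
Proof.
elim=> [u' | c' s a u2 _ HB _ IH] y Hy Hs.
  by case: y Hy Hs => // _; rewrite sub0seq.
case: y Hy Hs => [|z y] Hy Hs; first exact: sub0seq.
rewrite -cat_rcons -cat1s.
apply: cat_subseq.
  rewrite sub1seq mem_rcons; apply: HB; apply: Hy; exact: mem_head.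
apply: IH => //. by move=> t Ht; apply: Hy; rewrite inE Ht orbT.
Qed.

Lemma arch1_ex (T : eqType) (B u : seq T) : u != [::] -> {subset B <= u} ->
  arches B 1 u.
Proof.
elim/last_ind: u => [//|u x IH] _ HB.
case E: (all (fun b => b \in u) B).
  case: (eqVneq u [::]) => [Eu|Nu].
    rewrite Eu in E *. have -> : rcons [::] x = [::] ++ x :: [::] by [].
    apply: ArchS => //; last exact: Arch0.
    by move=> b /(allP E).
  have := IH Nu (fun b Hb => allP E b Hb).
  move=> H; inversion H; subst.
  rewrite -cats1 -catA cat_cons. apply: ArchS => //.
  exact: Arch0.
have [b Hb Hnb] := allPn (negbT E).
have Ebx : b = x.
  by move: (HB b Hb); rewrite mem_rcons inE (negbTE Hnb) orbF => /eqP.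
subst b.
rewrite -cats1. apply: ArchS => //; last exact: Arch0.
by move=> t /HB; rewrite mem_rcons.
Qed.

Lemma exists_max (T : eqType) (B u : seq T) n :
  exists c, c <= n /\ arches B c u /\ (c = n \/ ~ arches B c.+1 u).
Proof.
elim: n => [|n [c [Hc [Ha [Ec|Hn]]]]].
- exists 0; split => //; split; [exact: Arch0 | by left].
- subst c. case: (classic (arches B n.+1 u)) => H.
    exists n.+1; split => //; split => //; by left.
  exists n; split => //; split => //; by right.
- exists c; split; first exact: leqW.
  split => //; by right.
Qed.

Lemma lesim_nil (T : eqType) n : lesimn n ([::] : seq T) [::].
Proof. split => //. Qed.

Lemma size_filter_lt (T : eqType) (B : seq T) a :
  a \in B -> size (filter (predC1 a) B) < size B.
Proof.
move=> Ha. rewrite size_filter.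
have H1 := count_predC (pred1 a) B.
have H2 : 0 < count (pred1 a) B by rewrite -has_count; apply/hasP; exists a; [exact: Ha | exact: eqxx].
have -> : count (predC1 a) B = count (predC (pred1 a)) B by apply: eq_count.
lia.
Qed.

Section Main.
Variable T : eqType.

Definition S k := forall (B : seq T) u n, size B <= k -> {subset u <= B} ->
  exists v, lesimn n v u /\ size v <= h k n.

Lemma pref (x s s' : seq T) a q :
  simn q.+1 s' s -> subseq x (rcons s a) -> size x <= q.+1 -> subseq x (rcons s' a).
Proof.
move=> Hs Hx Hsz. rewrite -cats1 in Hx.
have [x0 [x1 [Ex [H0 H1]]]] := subseq_catE Hx. subst x.
rewrite -cats1. apply: cat_subseq => //.
have Hx0 : size x0 <= q.+1 by move: Hsz; rewrite size_cat; lia.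
by rewrite Hs.
Qed.

Lemma claim k (IH : S k) (B : seq T) (hB : size B <= k.+1) q c u :
  {subset u <= B} -> arches B c u -> (q = 0 \/ ~ arches B c.+1 u) ->
  exists v, subseq v u /\ size v <= c * h k q.+1 + c + h k q /\
    forall w, size w <= c + q -> subseq w u -> subseq w v.
Proof.
move=> Hu Ha. elim: Ha Hu => [u' | c' s a u2 Has HaB Ha2 IHa] Hu Hq.
- case: (eqVneq u' [::]) => [->|Nu].
    exists [::]; split => //; split => //.
  case: Hq => [->|Hq].
    exists [::]; split; first exact: sub0seq; split => //.
    by move=> w; rewrite leqn0 size_eq0 => /eqP ->.
  case E: (all (fun b => b \in u') B).
    by exfalso; apply: Hq; apply: arch1_ex => // b /(allP E).
  have [b Hb Hnb] := allPn (negbT E).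
  have [v [[Hsim Hsub] Hsz]] := IH (filter (predC1 b) B) u' q
    (ltnSE (leq_trans (size_filter_lt Hb) hB))
    (fun t Ht => ltac:(rewrite mem_filter /= (Hu t Ht) andbT;
       apply/eqP => E'; subst t; by rewrite Ht in Hnb)).
  exists v; split => //; split => //.
  by move=> w Hw Hwu; rewrite Hsim // add0n.
- have HaB' : a \in B by apply: Hu; rewrite mem_cat mem_head orbT.
  have Hsb : {subset s <= filter (predC1 a) B}.
    move=> t Ht. rewrite mem_filter /= (Hu t) ?mem_cat ?Ht // andbT.
    by apply/eqP => E'; subst t; rewrite Ht in Has.
  have [s' [[Hsim Hsub] Hsz]] := IH _ s q.+1 (ltnSE (leq_trans (size_filter_lt HaB') hB)) Hsb.
  have Hu2 : {subset u2 <= B}.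
    by move=> t Ht; apply: Hu; rewrite mem_cat inE Ht !orbT.
  have Hq2 : q = 0 \/ ~ arches B c'.+1 u2.
    case: Hq => [->|Hq]; [by left | right => H; apply: Hq; exact: ArchS].
  have [v2 [Hv2 [Hsz2 Hw2]]] := IHa Hu2 Hq2.
  exists (s' ++ a :: v2); split.
    apply: cat_subseq => //. rewrite -(cat1s a v2) -(cat1s a u2).
    exact: cat_subseq (subseq_refl _) Hv2.
  split.
    rewrite size_cat /= mulSn. nia.
  move=> w Hw Hwu.
  suff [x [y [-> [Hx [Hxs [Hy Hys]]]]]] : exists x y, w = x ++ y /\
      subseq x (rcons s a) /\ size x <= q.+1 /\ subseq y u2 /\ size y <= c' + q.
    rewrite -cat_rcons. apply: cat_subseq; first exact: (pref Hsim).
    exact: Hw2.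
  have HwB : {subset w <= B} by move=> t /(mem_subseq Hwu); apply: Hu.
  move: Hwu; rewrite -cat_rcons => /subseq_catE [w0 [w1 [Ew [H0 H1]]]].
  have Hsw : size w = size w0 + size w1 by rewrite Ew size_cat.
  case: (leqP (size w0) q.+1) => Hs0.
    case: (leqP (size w1) (c' + q)) => Hs1.
      by exists w0, w1.
    have Ew0 : w0 = [::] by apply/eqP; rewrite -size_eq0; lia.
    subst w0. case: w1 Ew H1 Hs1 Hsw => [|z y] Ew H1 Hs1 Hsw; first by [].
    rewrite cat0s in Ew. subst w.
    exists [:: z], y; split => //; split.
      rewrite sub1seq mem_rcons. apply: HaB. apply: HwB. exact: mem_head.
    split => //; split; last by move: Hw Hsw => /=; lia.
    exact: cons_subseq H1.
  exists (take (size w - c') w), (drop (size w - c') w).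
  split; first by rewrite cat_take_drop.
  have Hle : size w - c' <= size w0 by lia.
  split.
    apply: subseq_trans H0. rewrite {2}Ew take_cat.
    case: ltnP => Hlt; first exact: take_subseq.
    have Hz : size w - c' = size w0 by lia.
    by rewrite Hz subnn (take0 w1) (cats0 w0) subseq_refl.
  split; first by rewrite size_take; case: ltnP; lia.
  split; last by rewrite size_drop; lia.
  apply: (arches_sub Ha2).
    by move=> t /mem_drop; apply: HwB.
  rewrite size_drop; lia.
Qed.

Lemma main k : S k.
Proof.
elim: k => [|k IHk] B u n.
  move=> HB Hu. have HB0 : B = [::] by apply/eqP; rewrite -size_eq0 -leqn0.
  rewrite HB0 in Hu. have -> : u = [::].
    case: u Hu => // t u Hu. by have := Hu t (mem_head _ _).
  exists [::]; split => //; exact: lesim_nil.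
move=> HB Hu.
have [c [Hc [Ha Hq]]] := exists_max B u n.
have Hq' : n - c = 0 \/ ~ arches B c.+1 u.
  by case: Hq => [->|?]; [left; rewrite subnn | right].
have [v [Hv [Hsz Hw]]] := claim IHk HB Hu Ha Hq'.
exists v; split.
  split => //. move=> w Hwn. apply/idP/idP => H.
    exact: subseq_trans H Hv.
  apply: Hw => //. by rewrite subnKC.
apply: leq_trans Hsz _. rewrite /=.
have Hc1 : c < n.+1 by [].
have := @leq_bigmax _ (fun m : 'I_n.+1 => m * h k (n.+1 - m) + m + h k (n - m)) (Ordinal Hc1).
by rewrite /= subSn.
Qed.
End Main.

Theorem theorem6 (A : finType) (u : seq A) (n : nat) :
  0 < #|A| ->
  exists v : seq A, lesimn n v u /\ size v <= f #|A| n.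
Proof.
move=> HA. rewrite /f -h_fk prednK //.
apply: (@main A #|A| (enum A) u n); first by rewrite cardE.
by move=> t _; rewrite mem_enum.
Qed.
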